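(* (a) Fix an odd positive integer $k$. For a permutation of $[n]$ chosen uniformly among those with all cycle lengths odd, the expected number $\mathbb{E}_o^{(n)}Y_k$ of elements in $k$-cycles satisfies $\mathbb{E}_o^{(n)}Y_k=1+\frac{k+1}{2n}+O(n^{-2})$ as $n\to\infty$ through even values, and $\mathbb{E}_o^{(n)}Y_k=1+\frac{k-1}{2n}+O(n^{-2})$ as $n\to\infty$ through odd values. (b) Fix an even positive integer $k$. For a permutation of $[n]$ chosen uniformly among those with all cycle lengths even, $\mathbb{E}_e^{(n)}Y_k=1+\frac{k}{2n}+O(n^{-2})$ as $n\to\infty$ through even values.
   Context: $\mathbb{E}_o^{(n)}$ (resp. $\mathbb{E}_e^{(n)}$) denotes expectation under the uniform measure on permutations of $[n]$ with all cycle lengths odd (resp. even). $Y_k=kX_k$, where $X_k$ is the number of $k$-cycles, i.e. $Y_k$ is the number of elements lying in $k$-cycles. *)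

(* Defs.v *)
From HB Require Import structures.
From mathcomp Require Import all_boot all_order all_algebra all_fingroup.
Set Implicit Arguments. Unset Strict Implicit. Unset Printing Implicit Defensive.
Import Order.TTheory GRing.Theory Num.Theory.

Definition all_cycles_odd n (s : 'S_n) : bool :=
  [forall x : 'I_n, odd #|porbit s x|].

Definition all_cycles_even n (s : 'S_n) : bool :=
  [forall x : 'I_n, ~~ odd #|porbit s x|].

Definition Yk n (k : nat) (s : 'S_n) : nat :=
  #|[set x : 'I_n | #|porbit s x| == k]|.

Definition unif_exp (R : fieldType) n (P : pred 'S_n) (k : nat) : R :=
  ((\sum_(s | P s) Yk k s)%:R / #|[set s | P s]|%:R)%R.

Definition E_o (R : fieldType) n k : R := unif_exp R (@all_cycles_odd n) k.
Definition E_e (R : fieldType) n k : R := unif_exp R (@all_cycles_even n) k.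

(* Main.v *)
Require Import Defs.
From mathcomp Require Import all_boot all_order all_algebra all_fingroup.
From mathcomp Require Import ring lra zify.
Import Order.TTheory GRing.Theory Num.Theory.
Set Implicit Arguments. Unset Strict Implicit. Unset Printing Implicit Defensive.

Section Part1.
Local Open Scope group_scope.

Section PorbitFacts.
Variable T : finType.
Implicit Types (s : {perm T}) (x y : T).

Lemma porbit_L s x : (s ^+ #|porbit s x|) x = x.
Proof. by rewrite permX iter_porbit. Qed.

Lemma porbit_min s x i : 0 < i < #|porbit s x| -> (s ^+ i) x != x.
Proof.
case/andP=> i0 iL; apply/eqP=> e.
have U := uniq_traject_porbit s x.
have : nth x (traject s x #|porbit s x|) i = nth x (traject s x #|porbit s x|) 0.
  rewrite !nth_traject ?lt0n ?card_porbit_neq0 //= -permX e //.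
move/eqP; rewrite nth_uniq ?size_traject //; last by rewrite lt0n card_porbit_neq0.
by move/eqP=> e0; rewrite e0 in i0.
Qed.

Lemma card_porbit_min s x m : 0 < m -> (s ^+ m) x = x ->
  (forall i, 0 < i < m -> (s ^+ i) x != x) -> #|porbit s x| = m.
Proof.
move=> m0 em hm; have L0 : 0 < #|porbit s x| by rewrite lt0n card_porbit_neq0.
case: (ltngtP m #|porbit s x|) => // h.
  by move: (@porbit_min s x m); rewrite m0 h em eqxx => /(_ isT).
by move: (hm _ (andb_true_intro (conj L0 h))); rewrite porbit_L eqxx.
Qed.

Lemma porbit_transport (T' : finType) s (t : {perm T'}) (f : T -> T') x :
  injective f -> (forall i, (t ^+ i) (f x) = f ((s ^+ i) x)) ->
  porbit t (f x) = f @: porbit s x.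
Proof.
move=> fi h; apply/setP=> z; apply/porbitP/imsetP.
  by case=> i ->; exists ((s ^+ i) x); rewrite ?mem_porbit.
by case=> y /porbitP[i ->] ->; exists i.
Qed.

Lemma card_porbit_transport (T' : finType) s (t : {perm T'}) (f : T -> T') x :
  injective f -> (forall i, (t ^+ i) (f x) = f ((s ^+ i) x)) ->
  #|porbit t (f x)| = #|porbit s x|.
Proof. by move=> fi h; rewrite (porbit_transport fi h) card_imset. Qed.

Lemma porbit_lt s x y : y \in porbit s x ->
  exists2 i, i < #|porbit s x| & y = (s ^+ i) x.
Proof. by rewrite porbit_traject => /trajectP[i lt ->]; exists i; rewrite ?permX. Qed.

Lemma conj_iter s u x i : ((s ^ u) ^+ i) (u x) = u ((s ^+ i) x).
Proof. by rewrite -conjXg permJ. Qed.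

Lemma card_porbitJ s u x : #|porbit (s ^ u) (u x)| = #|porbit s x|.
Proof. by apply: card_porbit_transport; [apply: perm_inj|apply: conj_iter]. Qed.

End PorbitFacts.

End Part1.

Section Part2.
Local Open Scope group_scope.

Section Sym.
Variable P : pred nat.
Variable T : finType.
Implicit Types (s : {perm T}) (x y : T).

Definition goodP s c := [forall z, (z \notin porbit s c) ==> P #|porbit s z|].
Definition QP c k s := (#|porbit s c| == k) && goodP s c.
Definition Hc c k := #|[set s | QP c k s]|.

Lemma goodPJ s u c : goodP (s ^ u) (u c) = goodP s c.
Proof.
have E : porbit (s ^ u) (u c) = u @: porbit s c.
  by apply: porbit_transport; [apply: perm_inj|apply: conj_iter].
apply/forallP/forallP=> H z.
  by move: (H (u z)); rewrite E mem_imset ?card_porbitJ //; apply: perm_inj.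
rewrite -[z](permKV u); move: (H (u^-1 z)).
by rewrite E mem_imset ?card_porbitJ //; apply: perm_inj.
Qed.

Lemma QPJ (c : T) k s (u : {perm T}) : QP (u c) k (s ^ u) = QP c k s.
Proof. by rewrite /QP card_porbitJ goodPJ. Qed.

Lemma Hc_sym (c d : T) k : Hc c k = Hc d k.
Proof.
pose u := tperm c d. rewrite /Hc.
have -> : [set s | QP d k s] = (fun s => s ^ u) @: [set s | QP c k s].
  apply/setP=> z; rewrite inE; apply/idP/imsetP.
    move=> H; exists (z ^ u^-1); last by rewrite conjgKV.
    by rewrite inE -(QPJ _ _ _ u) conjgKV /u tpermL.
  by case=> s; rewrite inE => H ->; rewrite -[d](tpermL c d) QPJ.
by rewrite card_imset //; apply: conjg_inj.
Qed.

Definition allP s := [forall x, P #|porbit s x|].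

Lemma allP_split s x : allP s = P #|porbit s x| && goodP s x.
Proof.
apply/forallP/andP=> [H|[Hx Hg] z]; first by split=> //; apply/forallP=> z; apply/implyP.
case: (boolP (z \in porbit s x)) => zx.
  by rewrite -eq_porbit_mem in zx; rewrite (eqP zx).
by move/forallP: Hg => /(_ z) /implyP; apply.
Qed.

Lemma allP_QP s x k : allP s && (#|porbit s x| == k) = P k && QP x k s.
Proof.
rewrite (allP_split s x) /QP; case: eqP => [->|]; first by rewrite andbT.
by rewrite !andbF.
Qed.

End Sym.

End Part2.

Section Part3.
Local Open Scope group_scope.

Section Decomp.
Variable P : pred nat.
Variable n : nat.
Implicit Types (r : 'S_n) (c : 'I_n.+1).

Definition Rl r : 'S_n.+1 := lift_perm ord_max ord_max r.
Definition Phi c r : 'S_n.+1 := tperm c ord_max * Rl r.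

Lemma Rl_max r : Rl r ord_max = ord_max.
Proof. by rewrite /Rl lift_perm_id. Qed.

Lemma Rl_lift r y : Rl r (lift ord_max y) = lift ord_max (r y).
Proof. by rewrite /Rl lift_perm_lift. Qed.

Lemma iterR r i y : (Rl r ^+ i) (lift ord_max y) = lift ord_max ((r ^+ i) y).
Proof. by elim: i => [|i IH]; rewrite ?expg0 ?perm1 // !expgSr !permM IH Rl_lift. Qed.

Lemma Phi_c c r : Phi c r c = ord_max.
Proof. by rewrite /Phi permM tpermL Rl_max. Qed.

Lemma Phi_inj : injective (fun p : 'I_n.+1 * 'S_n => Phi p.1 p.2).
Proof.
move=> [c1 r1] [c2 r2] /= E.
have ec : c1 = c2.
  apply: (@perm_inj _ (Phi c1 r1)); rewrite Phi_c E Phi_c //.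
subst c2; move/mulgI: E => E; congr (_, _).
apply/permP=> y; apply: (@lift_inj _ ord_max).
by rewrite -!Rl_lift E.
Qed.

Lemma Phi_bij : bijective (fun p : 'I_n.+1 * 'S_n => Phi p.1 p.2).
Proof.
apply: (inj_card_bij Phi_inj).
by rewrite card_prod !card_Sn card_ord factS.
Qed.

Lemma card_Phi (Q : pred 'S_n.+1) :
  #|[set t | Q t]| = \sum_(c < n.+1) #|[set r | Q (Phi c r)]|.
Proof.
rewrite -sum1_card (reindex (fun p : 'I_n.+1 * 'S_n => Phi p.1 p.2)) /=; last first.
  by case: Phi_bij => g h1 h2; exists g => x _; [apply: h1|apply: h2].
rewrite (eq_bigl (fun p : 'I_n.+1 * 'S_n => xpredT p.1 && Q (Phi p.1 p.2))); last first.
  by move=> p; rewrite inE.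
rewrite -(pair_big_dep xpredT (fun c r => Q (Phi c r)) (fun _ _ => 1%N)) /=.
by apply: eq_bigr => c _; rewrite -sum1_card; apply: eq_bigl => r; rewrite !inE.
Qed.

Lemma Phi_max r : Phi ord_max r = Rl r.
Proof. by rewrite /Phi tperm1 mul1g. Qed.

Lemma porbit_Rl_max r z : z \in porbit (Rl r) ord_max -> z = ord_max.
Proof. by case/porbitP=> i ->; rewrite permX_fix // Rl_max. Qed.

Lemma card_porbit_Rl_max r : #|porbit (Rl r) ord_max| = 1%N.
Proof. by apply: card_porbit_min => // [|[|i]] //; rewrite expg1 Rl_max. Qed.

Lemma card_porbit_Rl r y : #|porbit (Rl r) (lift ord_max y)| = #|porbit r y|.
Proof. by apply: (card_porbit_transport (@lift_inj _ ord_max)) => i; apply: iterR. Qed.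

Lemma goodP_Rl r : goodP P (Rl r) ord_max = allP P r.
Proof.
apply/forallP/forallP=> H z.
  have := H (lift ord_max z); rewrite card_porbit_Rl => /implyP; apply.
  by apply: contraL (neq_lift ord_max z) => /porbit_Rl_max ->; rewrite eqxx.
apply/implyP=> zn; case: (unliftP ord_max z) zn => [y ->|->]; last by rewrite porbit_id.
by rewrite card_porbit_Rl.
Qed.


Section LiftCase.
Variables (r : 'S_n) (c' : 'I_n).
Let t := Phi (lift ord_max c') r.
Let L := #|porbit r c'|.

Lemma t_max : t ord_max = lift ord_max (r c').
Proof. by rewrite /t /Phi permM tpermR Rl_lift. Qed.

Lemma t_other y : y != c' -> t (lift ord_max y) = lift ord_max (r y).
Proof.
move=> ne; rewrite /t /Phi permM tpermD ?Rl_lift //.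
  by rewrite (inj_eq (@lift_inj _ ord_max)) eq_sym.
by rewrite neq_lift.
Qed.

Lemma iter_t i : i < L -> (t ^+ i.+1) ord_max = lift ord_max ((r ^+ i.+1) c').
Proof.
elim: i => [|i IH] lt; first by rewrite !expg1 t_max.
rewrite expgSr permM IH ?(ltnW lt) // t_other; first by rewrite -permM -expgSr.
by apply: porbit_min; rewrite /= lt.
Qed.

Lemma t_L : (t ^+ L.+1) ord_max = ord_max.
Proof.
have L0 : 0 < L by rewrite lt0n card_porbit_neq0.
have e := @iter_t L.-1; rewrite prednK // porbit_L in e.
by rewrite expgSr permM e ?ltn_predL // /t Phi_c.
Qed.

Lemma card_porbit_t : #|porbit t ord_max| = L.+1.
Proof.
apply: card_porbit_min => //; first exact: t_L.
move=> [|i] //= lt; rewrite iter_t //.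
by rewrite eq_sym neq_lift.
Qed.

Lemma iter_t_other y : y \notin porbit r c' ->
  forall i, (t ^+ i) (lift ord_max y) = lift ord_max ((r ^+ i) y).
Proof.
move=> ny; elim=> [|i IH]; first by rewrite !expg0 !perm1.
rewrite expgSr permM IH t_other; first by rewrite -permM -expgSr.
apply: contraNneq ny => e; rewrite porbit_sym -e; exact: mem_porbit.
Qed.

Lemma lift_in_porbit_t y : y \in porbit r c' -> lift ord_max y \in porbit t ord_max.
Proof.
rewrite -(porbit_perm r 1) expg1 => /porbit_lt[i].
rewrite (porbit_perm r 1 c') => lt ->.
have -> : (r ^+ i) (r c') = (r ^+ i.+1) c' by rewrite expgS permM.
by rewrite -iter_t // mem_porbit.
Qed.

Lemma goodP_t : goodP P t ord_max = goodP P r c'.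
Proof.
apply/forallP/forallP=> H y.
  apply/implyP=> ny; have := H (lift ord_max y).
  rewrite (card_porbit_transport (@lift_inj _ ord_max) (iter_t_other ny)).
  move/implyP; apply; apply/negP=> yin.
  move: (yin); rewrite porbit_sym (porbit_transport (@lift_inj _ ord_max) (iter_t_other ny)).
  by case/imsetP=> w _ /eqP; rewrite (negbTE (neq_lift _ _)).
apply/implyP; case: (unliftP ord_max y) => [w ->|->]; last by rewrite porbit_id.
move=> nw; have nw' : w \notin porbit r c'.
  by apply: contra nw; apply: lift_in_porbit_t.
have := H w; rewrite nw' /=.
by rewrite (card_porbit_transport (@lift_inj _ ord_max) (iter_t_other nw')).
Qed.

Lemma QP_t k : QP P ord_max k.+1 t = QP P c' k r.
Proof. by rewrite /QP card_porbit_t goodP_t eqSS. Qed.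

End LiftCase.

Lemma Hc_max_S k : Hc P (ord_max : 'I_n.+1) k.+1 =
  ((k == 0%N) * #|[set r : 'S_n | allP P r]| + \sum_(c' < n) Hc P c' k)%N.
Proof.
rewrite /Hc card_Phi big_ord_recr /= addnC; congr (_ + _)%N; last first.
  apply: eq_bigr => c' _.
  have -> : widen_ord (leqnSn n) c' = lift ord_max c' by apply: val_inj; rewrite /= /bump leqNgt ltn_ord.
  by apply: eq_card => r; rewrite !inE QP_t.
case: k => [|k].
  rewrite mul1n; apply: eq_card => r.
  by rewrite !inE /QP Phi_max card_porbit_Rl_max goodP_Rl.
rewrite mul0n; apply: eq_card0 => r.
by rewrite !inE /QP Phi_max card_porbit_Rl_max.
Qed.

End Decomp.

End Part3.

Section Part4.
Local Open Scope group_scope.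

Lemma card_sum (T : finType) (Q : pred T) : #|[set s | Q s]| = (\sum_s (Q s : nat))%N.
Proof.
rewrite -sum1_card big_mkcond /=; apply: eq_bigr => s _; rewrite inE; by case: (Q s).
Qed.

Section Count.
Variable P : pred nat.

Definition On n := #|[set s : 'S_n | allP P s]|.

Lemma Hc0 (T : finType) (c : T) : Hc P c 0 = 0%N.
Proof. by apply: eq_card0 => s; rewrite inE /QP (negbTE (card_porbit_neq0 _ _)). Qed.

Lemma sum_Hc n k : (\sum_(c < n.+1) Hc P c k = n.+1 * Hc P (ord_max : 'I_n.+1) k)%N.
Proof.
rewrite (eq_bigr (fun _ => Hc P (ord_max : 'I_n.+1) k)); last by move=> c _; apply: Hc_sym.
by rewrite sum_nat_const card_ord.
Qed.

Lemma B_formula n j : Hc P (ord_max : 'I_n.+1) j.+1 = (n ^_ j * On (n - j))%N.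
Proof.
elim: n j => [|m IH] j.
  rewrite Hc_max_S big_ord0 addn0 /On; case: j => [|j]; first by rewrite ffactn0.
  by rewrite ffact0n.
rewrite Hc_max_S sum_Hc /On; case: j => [|j].
  by rewrite Hc0 muln0 addn0 ffactn0 subn0.
by rewrite mul0n add0n IH ffactSS subSS mulnA.
Qed.

Lemma O_rec n : On n.+1 = (\sum_(j < n.+1) P j.+1 * (n ^_ j * On (n - j)))%N.
Proof.
rewrite {1}/On card_sum.
rewrite (eq_bigr (fun s : 'S_n.+1 => \sum_(j < n.+1) (P j.+1 && QP P ord_max j.+1 s : nat))%N).
  rewrite exchange_big /=; apply: eq_bigr => j _.
  rewrite -B_formula /Hc card_sum; case: (P j.+1); last by rewrite mul0n big1.
  by rewrite mul1n.
move=> s _.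
have X0 : 0 < #|porbit s ord_max| by rewrite lt0n card_porbit_neq0.
have X1 : #|porbit s ord_max|.-1 < n.+1.
  by rewrite prednK // (leq_trans (max_card _)) // card_ord.
rewrite (bigD1 (Ordinal X1)) //= big1 ?addn0.
  by rewrite prednK // -allP_QP eqxx andbT.
move=> j /eqP nj; rewrite /QP; case: eqP => [e|]; last by rewrite andbF.
by case: nj; apply: val_inj => /=; rewrite e.
Qed.

Lemma sumYk n k : 0 < k ->
  (\sum_(s : 'S_n | allP P s) Yk k s = P k * (n ^_ k * On (n - k)))%N.
Proof.
move=> k0.
rewrite (eq_bigr (fun s => \sum_x (#|porbit s x| == k : nat))%N); last first.
  by move=> s _; rewrite /Yk card_sum.
rewrite big_mkcond /=.
rewrite (eq_bigr (fun s => \sum_x (allP P s && (#|porbit s x| == k) : nat))%N); last first.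
  by move=> s _; case: (allP P s) => //; rewrite big1.
rewrite exchange_big /=.
rewrite (eq_bigr (fun x => P k * Hc P x k)%N); last first.
  move=> x _; rewrite (eq_bigr (fun s => (P k && QP P x k s : nat))); last first.
    by move=> s _; rewrite allP_QP.
  by rewrite /Hc card_sum; case: (P k); rewrite ?mul1n ?mul0n // big1.
case: n => [|n].
  rewrite big1 ?ffact0n; last by case.
  by case: k k0 => // k _; rewrite /= mul0n muln0.
rewrite -big_distrr /= sum_Hc; case: k k0 => // k _.
by rewrite B_formula ffactSS subSS !mulnA.
Qed.

End Count.

End Part4.

Section Part5.

Section Rec.
Variable P : pred nat.

Lemma On0 : On P 0 = 1%N.
Proof.
rewrite /On (eq_card (B := predT)) ?card_Sn //.
by move=> s; rewrite !inE; apply/forallP=> -[].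
Qed.

Lemma On1 : On P 1 = P 1.
Proof. by rewrite O_rec big_ord_recl big_ord0 On0 /= ffactn0 !muln1 addn0. Qed.

Lemma On2 : On P 2 = (P 1 + P 2)%N.
Proof.
rewrite O_rec !big_ord_recl big_ord0 /= On1 On0 ffactn0 ffactn1 /=.
by case: (P 1); case: (P 2).
Qed.

Lemma On_rec3 (hP : forall j, P j.+3 = P j.+1) n :
  On P n.+3 = (P 1 * On P n.+2 + P 2 * (n.+2 * On P n.+1) + n.+2 * n.+1 * On P n.+1)%N.
Proof.
rewrite O_rec big_ord_recl big_ord_recl /= ffactn0 ffactn1 subn0 mul1n.
have -> : (n.+2 - bump 0 0 = n.+1)%N by [].
rewrite (O_rec P n) /= -addnA; congr (_ + (_ + _))%N.
rewrite big_distrr; apply: eq_bigr => i _.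
have -> : bump 0 (bump 0 i) = i.+2 by [].
rewrite hP !ffactSS subSS.
rewrite subSS /=; ring.
Qed.

End Rec.

Definition Po := (odd : pred nat).
Definition Pe := (fun m => ~~ odd m) : pred nat.

Lemma Oo_closed m : On Po m.*2.+1 = (m.*2.+1 * On Po m.*2)%N /\
                    On Po m.*2.+2 = (m.*2.+1 ^ 2 * On Po m.*2)%N.
Proof.
have hP : forall j, Po j.+3 = Po j.+1 by move=> j; rewrite /Po /= negbK.
elim: m => [|m [IH1 IH2]]; first by rewrite /= On2 On1 On0.
have A : On Po m.+1.*2.+1 = (m.+1.*2.+1 * On Po m.+1.*2)%N.
  rewrite doubleS On_rec3 // IH2 IH1 /Po /=; ring.
split=> //; rewrite doubleS On_rec3 //.
rewrite -doubleS A doubleS IH2 /Po /=; ring.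
Qed.

Lemma Oe_closed m : On Pe m.*2.+2 = (m.*2.+1 ^ 2 * On Pe m.*2)%N.
Proof.
have hP : forall j, Pe j.+3 = Pe j.+1 by move=> j; rewrite /Pe /= negbK.
case: m => [|m]; first by rewrite /= On2 On0.
rewrite doubleS On_rec3 // /Pe /=; ring.
Qed.

End Part5.

Section Part6.

Definition Pod j q := (\prod_(t < q) (j + t).*2.+1)%N.
Definition Pev j q := (\prod_(t < q) (j + t).*2.+2)%N.

Lemma PodS j q : Pod j q.+1 = (Pod j q * (j + q).*2.+1)%N.
Proof. by rewrite /Pod big_ord_recr. Qed.
Lemma PevS j q : Pev j q.+1 = (Pev j q * (j + q).*2.+2)%N.
Proof. by rewrite /Pev big_ord_recr. Qed.

Lemma I1 j q : ((j + q).*2.+2 ^_ q.*2.+1 * On Po j.*2.+1 * Pod j q.+1 =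
                On Po (j + q).*2.+2 * Pev j q.+1)%N.
Proof.
elim: q => [|q IH].
  rewrite PodS PevS /Pod /Pev !big_ord0 !addn0 ffactn1.
  case: (Oo_closed j) => -> ->; ring.
rewrite [Pod j q.+2]PodS [Pev j q.+2]PevS addnS doubleS ffactSS ffactSS.
case: (Oo_closed (j + q).+1) => _; rewrite doubleS => ->.
set F := (_ ^_ _)%N; set O1 := On Po _; set A := Pod j q.+1.
set O2 := On Po _; set B := Pev j q.+1.
transitivity ((j + q).*2.+4 * (j + q).*2.+3 * (j + q).*2.+3 * (F * O1 * A))%N; first ring.
rewrite IH; ring.
Qed.

Lemma I2 j q : ((j + q).*2.+1 ^_ q.*2.+1 * On Po j.*2 * Pod j q =
                On Po (j + q).*2.+1 * Pev j q)%N.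
Proof.
elim: q => [|q IH].
  rewrite /Pod /Pev !big_ord0 !addn0 ffactn1.
  case: (Oo_closed j) => -> _; ring.
rewrite PodS PevS addnS doubleS ffactSS ffactSS.
case: (Oo_closed (j + q).+1) => E1 _; rewrite doubleS in E1; rewrite E1.
case: (Oo_closed (j + q)) => E2 E3; rewrite E3.
rewrite E2 in IH.
set F := (_ ^_ _)%N in IH *; set O1 := On Po j.*2 in IH *.
set A := Pod j q in IH *; set O2 := On Po (j + q).*2 in IH *; set B := Pev j q in IH *.
transitivity ((j + q).*2.+3 * (j + q).*2.+2 * (j + q).*2.+1 * (F * O1 * A))%N; first ring.
rewrite IH; ring.
Qed.

Lemma I3 j q : ((j + q).*2 ^_ q.*2 * On Pe j.*2 * Pod j q =
                On Pe (j + q).*2 * Pev j q)%N.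
Proof.
elim: q => [|q IH].
  by rewrite /Pod /Pev !big_ord0 !addn0 ffactn0 mul1n.
rewrite PodS PevS addnS doubleS ffactSS ffactSS Oe_closed.
set F := (_ ^_ _)%N in IH *; set O1 := On Pe j.*2 in IH *.
set A := Pod j q in IH *; set O2 := On Pe (j + q).*2 in IH *; set B := Pev j q in IH *.
transitivity ((j + q).*2.+2 * (j + q).*2.+1 * (j + q).*2.+1 * (F * O1 * A))%N; first ring.
rewrite IH; ring.
Qed.

End Part6.

Local Open Scope ring_scope.

Lemma prod_approx (R : realFieldType) (q : nat) (D : R) : 0 <= D ->
  exists C : R, forall (x : R) (f : nat -> R), 0 < x -> x <= 1 ->
    (forall t, (t < q)%N -> `|f t - (1 + x)| <= D * x ^+ 2) ->
    `|\prod_(t < q) f t - (1 + q%:R * x)| <= C * x ^+ 2.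
Proof.
move=> D0; elim: q => [|q [C IH]].
  by exists 0 => x f _ _ _; rewrite big_ord0 mul0r addr0 subrr normr0 mul0r.
exists (C * (2 + D) + q%:R + (1 + q%:R) * D) => x f x0 x1 hf.
have hp := IH x f x0 x1 (fun t lt => hf t (ltnW lt)).
have he := hf q (ltnSn q).
rewrite big_ord_recr /=.
set p := \prod_(i < q) f (widen_ord (leqnSn q) i) in hp *.
set u := p - (1 + q%:R * x) in hp.
set e := f q - (1 + x) in he.
have -> : p * f q - (1 + q.+1%:R * x) = u * f q + e * (1 + q%:R * x) + q%:R * x ^+ 2.
  by rewrite /u /e -natr1; ring.
have x2 : 0 <= x ^+ 2 by rewrite exprn_ge0 // ltW.
have x21 : x ^+ 2 <= 1 by rewrite expr_le1 // ltW.
have hf' : `|f q| <= 2 + D.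
  have -> : f q = e + (1 + x) by rewrite /e subrK.
  apply: (le_trans (ler_normD _ _)).
  have : `|1 + x| <= 2 by rewrite ger0_norm; lra.
  have : D * x ^+ 2 <= D by rewrite -{2}[D]mulr1 ler_wpM2l.
  lra.
have hq : `|1 + q%:R * x| <= 1 + q%:R.
  rewrite ger0_norm; last by rewrite addr_ge0 // mulr_ge0 // ltW.
  rewrite lerD2l -{2}[q%:R]mulr1 ler_wpM2l //.
have A1 : `|u * f q| <= C * x ^+ 2 * (2 + D).
  by rewrite normrM ler_pM.
have A2 : `|e * (1 + q%:R * x)| <= D * x ^+ 2 * (1 + q%:R).
  by rewrite normrM ler_pM.
have A3 : `|q%:R * x ^+ 2| = q%:R * x ^+ 2 by rewrite ger0_norm // mulr_ge0.
apply: (le_trans (ler_normD _ _)); rewrite A3.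
apply: (le_trans (lerD (ler_normD _ _) (lexx _))).
have -> : (C * (2 + D) + q%:R + (1 + q%:R) * D) * x ^+ 2 =
   C * x ^+ 2 * (2 + D) + D * x ^+ 2 * (1 + q%:R) + q%:R * x ^+ 2 by ring.
by rewrite lerD2r lerD.
Qed.


Lemma factor_bound (R : realFieldType) (a n K : nat) : (0 < a)%N -> (a <= n)%N ->
  (n <= a + K)%N -> (n <= a.*2)%N ->
  `|(1 + (a%:R : R)^-1) - (1 + (n%:R)^-1)| <= (2 * K%:R) * (n%:R^-1) ^+ 2.
Proof.
move=> a0 an nK n2a.
have A0 : (0 : R) < a%:R by rewrite ltr0n.
have N0 : (0 : R) < n%:R by rewrite ltr0n; lia.
have hAN : (a%:R : R) <= n%:R by rewrite ler_nat.
have hNK : (n%:R : R) <= a%:R + K%:R by rewrite -natrD ler_nat.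
have hN2 : (n%:R : R) <= 2 * a%:R by rewrite -[2]/(2%:R) -natrM ler_nat; lia.
set x := (n%:R : R)^-1; set y := (a%:R : R)^-1.
have x0 : 0 < x by rewrite invr_gt0.
have y0 : 0 < y by rewrite invr_gt0.
have F1 : forall A N : R, A != 0 -> N != 0 ->
    1 + A^-1 - (1 + N^-1) = (N - A) * (A^-1 * N^-1).
  by move=> A N hA hN; field; rewrite hA hN.
have F2 : forall A N : R, A != 0 -> N != 0 ->
    2 * N^-1 - A^-1 = (2 * A - N) * (A^-1 * N^-1).
  by move=> A N hA hN; field; rewrite hA hN.
rewrite /x /y F1 -/x -/y ?lt0r_neq0 //.
have hy : y <= 2 * x.
  have e : 2 * x - y = (2 * a%:R - n%:R) * (y * x).
    by rewrite /x /y F2 ?lt0r_neq0.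
  by rewrite -subr_ge0 e mulr_ge0 // ?subr_ge0 // mulr_ge0 // ltW.
rewrite ger0_norm; last by rewrite mulr_ge0 ?subr_ge0 // mulr_ge0 // ltW.
have hd : n%:R - a%:R <= (K%:R : R) by lra.
have : (n%:R - a%:R) * (y * x) <= K%:R * (2 * x * x).
  apply: ler_pM => //; first by rewrite subr_ge0.
    by rewrite mulr_ge0 // ltW.
  by rewrite ler_pM2r.
by move=> h; apply: (le_trans h); rewrite expr2; lra.
Qed.

Lemma ratio_prod (R : realFieldType) j q :
  (Pev j q)%:R / (Pod j q)%:R = \prod_(t < q) (1 + (((j + t).*2.+1)%:R : R)^-1).
Proof.
rewrite /Pev /Pod !natr_prod -prodf_div; apply: eq_bigr => t _.
have h : ((j + t).*2.+1)%:R != (0 : R) by rewrite pnatr_eq0.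
move: h; set A := ((j + t).*2.+1)%:R => h.
by rewrite -natr1 -/A mulrDl divff // mul1r addrC.
Qed.

Lemma main_bound (R : realFieldType) (q K : nat) :
  exists C : R, forall j n : nat, (0 < n)%N ->
    (forall t, (t < q)%N -> ((j + t).*2.+1 <= n)%N /\ (n <= (j + t).*2.+1 + K)%N
                           /\ (n <= ((j + t).*2.+1).*2)%N) ->
    `|(Pev j q)%:R / (Pod j q)%:R - (1 + q%:R / n%:R)| <= C / (n%:R ^+ 2).
Proof.
have D0 : (0 : R) <= 2 * K%:R by rewrite mulr_ge0.
case: (prod_approx q D0) => C HC; exists C => j n n0 ht.
have N0 : (0 : R) < n%:R by rewrite ltr0n.
rewrite ratio_prod -exprVn.
apply: (HC _ (fun t : nat => 1 + (((j + t).*2.+1)%:R : R)^-1)); first by rewrite invr_gt0.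
  by rewrite invf_le1 // ler1n.
move=> t /ht [h1 [h2 h3]]; exact: factor_bound.
Qed.

Lemma ratio_eq (R : realFieldType) (a b c d : nat) : (a * c = b * d)%N ->
  (0 < b)%N -> (0 < c)%N -> a%:R / b%:R = d%:R / c%:R :> R.
Proof.
move=> e b0 c0; apply/eqP; rewrite eqr_div ?pnatr_eq0 -?lt0n // -!natrM e mulnC.
by [].
Qed.

Lemma Oo_pos m : (0 < On Po m.*2)%N.
Proof.
elim: m => [|m IH]; first by rewrite On0.
by rewrite doubleS (Oo_closed m).2 muln_gt0 expn_gt0 IH.
Qed.

Lemma Oo_pos1 m : (0 < On Po m.*2.+1)%N.
Proof. by rewrite (Oo_closed m).1 muln_gt0 Oo_pos. Qed.

Lemma Oe_pos m : (0 < On Pe m.*2)%N.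
Proof.
elim: m => [|m IH]; first by rewrite On0.
by rewrite doubleS Oe_closed muln_gt0 expn_gt0 IH.
Qed.

Lemma Pod_pos j q : (0 < Pod j q)%N.
Proof. by rewrite /Pod prodn_gt0. Qed.


Lemma half_cancel (R : realFieldType) (A N : R) : (2 * A) / (2 * N) = A / N.
Proof.
have h2 : (2 : R) != 0 by rewrite pnatr_eq0.
by rewrite invfM mulrACA divff // mul1r.
Qed.

Lemma natr_dbl (R : realFieldType) (q : nat) : (q.*2%:R : R) = 2 * q%:R.
Proof. rewrite -addnn natrD; ring. Qed.

Unset Implicit Arguments.
Theorem proposition3p3 (R : realFieldType) :
  (forall k : nat, odd k ->
     (exists (C : R) (N : nat), forall n : nat, (N <= n)%N -> ~~ odd n ->
        `|E_o R n k - (1 + (k.+1)%:R / (2 * n%:R))| <= C / (n%:R ^+ 2))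
  /\ (exists (C : R) (N : nat), forall n : nat, (N <= n)%N -> odd n ->
        `|E_o R n k - (1 + (k.-1)%:R / (2 * n%:R))| <= C / (n%:R ^+ 2)))
  /\
  (forall k : nat, (0 < k)%N -> ~~ odd k ->
     exists (C : R) (N : nat), forall n : nat, (N <= n)%N -> ~~ odd n ->
        `|E_e R n k - (1 + k%:R / (2 * n%:R))| <= C / (n%:R ^+ 2)).
Proof.
split.
  move=> k kodd; set q := k./2.
  have hk : k = q.*2.+1 by rewrite /q; lia.
  split.
    have [C HC] := main_bound R q.+1 k.+1.
    exists C, ((k.+1).*2 + 2)%N => n Nn nev.
    set j := (n./2 - q.+1)%N.
    have hn : n = (j + q).*2.+2 by rewrite /j; lia.
    have E : E_o R n k = (Pev j q.+1)%:R / (Pod j q.+1)%:R.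
      rewrite /E_o /unif_exp.
      have -> : (\sum_(s | @all_cycles_odd n s) Yk k s)%N =
                (\sum_(s : 'S_n | allP Po s) Yk k s)%N by [].
      have -> : #|[set s | @all_cycles_odd n s]| = On Po n by [].
      rewrite sumYk; last by rewrite hk.
      rewrite /Po kodd mul1n; apply: ratio_eq; last exact: Pod_pos.
        rewrite hn hk; have -> : ((j + q).*2.+2 - q.*2.+1 = j.*2.+1)%N by lia.
        exact: (I1 j q).
      by rewrite hn -doubleS Oo_pos.
    rewrite E.
    have -> : (k.+1)%:R / (2 * n%:R) = (q.+1)%:R / n%:R :> R.
      by rewrite hk -doubleS natr_dbl half_cancel.
    apply: HC; first lia.
    by move=> t lt; rewrite hn; split; [|split]; lia.
  have [C HC] := main_bound R q k.+1.
  exists C, ((k.+1).*2 + 2)%N => n Nn nodd.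
  set j := (n./2 - q)%N.
  have hn : n = (j + q).*2.+1 by rewrite /j; lia.
  have E : E_o R n k = (Pev j q)%:R / (Pod j q)%:R.
    rewrite /E_o /unif_exp.
    have -> : (\sum_(s | @all_cycles_odd n s) Yk k s)%N =
              (\sum_(s : 'S_n | allP Po s) Yk k s)%N by [].
    have -> : #|[set s | @all_cycles_odd n s]| = On Po n by [].
    rewrite sumYk; last by rewrite hk.
    rewrite /Po kodd mul1n; apply: ratio_eq; last exact: Pod_pos.
      rewrite hn hk; have -> : ((j + q).*2.+1 - q.*2.+1 = j.*2)%N by lia.
      exact: (I2 j q).
    by rewrite hn Oo_pos1.
  rewrite E.
  have -> : (k.-1)%:R / (2 * n%:R) = q%:R / n%:R :> R.
    by rewrite hk /= natr_dbl half_cancel.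
  apply: HC; first lia.
  by move=> t lt; rewrite hn; split; [|split]; lia.
move=> k k0 kev; set q := k./2.
have hk : k = q.*2 by rewrite /q; lia.
have [C HC] := main_bound R q k.+1.
exists C, ((k.+1).*2 + 2)%N => n Nn nev.
set j := (n./2 - q)%N.
have hn : n = (j + q).*2 by rewrite /j; lia.
have E : E_e R n k = (Pev j q)%:R / (Pod j q)%:R.
  rewrite /E_e /unif_exp.
  have -> : (\sum_(s | @all_cycles_even n s) Yk k s)%N =
            (\sum_(s : 'S_n | allP Pe s) Yk k s)%N by [].
  have -> : #|[set s | @all_cycles_even n s]| = On Pe n by [].
  rewrite sumYk //.
  rewrite /Pe kev mul1n; apply: ratio_eq; last exact: Pod_pos.
    rewrite hn hk; have -> : ((j + q).*2 - q.*2 = j.*2)%N by lia.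
    exact: (I3 j q).
  by rewrite hn Oe_pos.
rewrite E.
have -> : k%:R / (2 * n%:R) = q%:R / n%:R :> R.
  by rewrite hk natr_dbl half_cancel.
apply: HC; first lia.
by move=> t lt; rewrite hn; split; [|split]; lia.
Qed.
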